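(* Let $T:\mathbb{R}^n\to\mathbb{R}^n$ be a continuous monotone operator, let $X\subset\mathbb{R}^n$ be nonempty, closed and convex, and let $X^*$ be the solution set of VI$(T,X)$. Consider the two conditions: (WS1) there exists $\rho>0$ such that for all $x^*\in X^*$ and all $x\in X$: $\langle T(x^* ),x-x^*\rangle\ge\rho\,\mathrm{dist}(x,X^* )$; (WS2) there exists $\rho>0$ such that for all $x^*\in X^*$ and all $z\in\mathbb{T}_X(x^* )\cap\mathbb{N}_{X^*}(x^* )$: $\langle T(x^* ),z\rangle\ge\rho\|z\|$. Then: (i) (WS1) implies (WS2) with the same $\rho$. (ii) If $T$ is constant on $X^*$, then (WS2) implies (WS1) with the same $\rho$.
   Context: VI$(T,X)$: find $x^*\in X$ with $\langle T(x^* ),x-x^*\rangle\ge0$ for all $x\in X$; $X^*$ denotes its solution set. $\mathrm{dist}(x,C)=\inf_{y\in C}\|x-y\|$ (Euclidean norm). For a set $C$ and $x\in C$, the normal cone is $\mathbb{N}_C(x)=\{v:\langle v,y-x\rangle\le0\ \forall y\in C\}$, and the tangent cone is $\mathbb{T}_C(x)=\{d:\exists t_k>0,\ d^k\to d \text{ with } x+t_kd^k\in C\ \forall k\}$. Monotone means $\langle T(y)-T(x),y-x\rangle\ge0$ for all $x,y$. *)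

(* Defs.v *)
From Stdlib Require Import Reals ClassicalEpsilon.
From mathcomp Require Import all_boot.
Set Implicit Arguments. Unset Strict Implicit. Unset Printing Implicit Defensive.

Local Open Scope R_scope.

Definition Vec (n : nat) := 'I_n -> R.

Definition vadd {n} (u v : Vec n) : Vec n := fun i => u i + v i.
Definition vsub {n} (u v : Vec n) : Vec n := fun i => u i - v i.
Definition vscale {n} (a : R) (u : Vec n) : Vec n := fun i => a * u i.

Definition ip {n} (u v : Vec n) : R := \big[Rplus/0]_(i < n) (u i * v i).
Definition vnorm {n} (u : Vec n) : R := sqrt (ip u u).

Definition vi_is_inf (S : R -> Prop) (m : R) : Prop :=
  (forall r, S r -> m <= r) /\ (forall b, (forall r, S r -> b <= r) -> b <= m).

(* vi_dist(x, C) = inf_{y in C} ||x - y|| (its value is only meaningful for C nonempty) *)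
Definition vi_dist {n} (x : Vec n) (C : Vec n -> Prop) : R :=
  epsilon (inhabits 0) (vi_is_inf (fun r => exists y, C y /\ r = vnorm (vsub x y))).

Definition vi_continuous_op {n} (T : Vec n -> Vec n) : Prop :=
  forall x eps, 0 < eps -> exists delta, 0 < delta /\
    forall y, vnorm (vsub y x) < delta -> vnorm (vsub (T y) (T x)) < eps.

Definition vi_monotone {n} (T : Vec n -> Vec n) : Prop :=
  forall x y, 0 <= ip (vsub (T y) (T x)) (vsub y x).

Definition vi_closed_set {n} (C : Vec n -> Prop) : Prop :=
  forall x, (forall eps, 0 < eps -> exists y, C y /\ vnorm (vsub x y) < eps) -> C x.

Definition vi_convex_set {n} (C : Vec n -> Prop) : Prop :=
  forall x y t, C x -> C y -> 0 <= t <= 1 ->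
    C (vadd (vscale t x) (vscale (1 - t) y)).

Definition VI_sol {n} (T : Vec n -> Vec n) (X : Vec n -> Prop) (x : Vec n) : Prop :=
  X x /\ forall y, X y -> 0 <= ip (T x) (vsub y x).

Definition vi_normal_cone {n} (C : Vec n -> Prop) (x v : Vec n) : Prop :=
  forall y, C y -> ip v (vsub y x) <= 0.

Definition vi_vconv {n} (s : nat -> Vec n) (l : Vec n) : Prop :=
  forall eps, 0 < eps -> exists N, forall k, (N <= k)%nat -> vnorm (vsub (s k) l) < eps.

Definition vi_tangent_cone {n} (C : Vec n -> Prop) (x d : Vec n) : Prop :=
  exists (t : nat -> R) (dk : nat -> Vec n),
    (forall k, 0 < t k) /\ vi_vconv dk d /\ forall k, C (vadd x (vscale (t k) (dk k))).

Definition WS1 {n} (T : Vec n -> Vec n) (X : Vec n -> Prop) (rho : R) : Prop :=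
  forall xs x, VI_sol T X xs -> X x ->
    rho * vi_dist x (VI_sol T X) <= ip (T xs) (vsub x xs).

Definition WS2 {n} (T : Vec n -> Vec n) (X : Vec n -> Prop) (rho : R) : Prop :=
  forall xs z, VI_sol T X xs -> vi_tangent_cone X xs z -> vi_normal_cone (VI_sol T X) xs z ->
    rho * vnorm z <= ip (T xs) z.

(* Main.v *)
Require Import Defs.
From Stdlib Require Import Reals Lra Lia Psatz ClassicalEpsilon FunctionalExtensionality.
From HB Require Import structures.
From mathcomp Require Import all_boot.
Local Open Scope R_scope.

Lemma RplusA' : associative Rplus. Proof. move=> a b c; ring. Qed.
Lemma Rplus0l' : left_id 0 Rplus. Proof. move=> a; ring. Qed.
Lemma RplusC' : commutative Rplus. Proof. move=> a b; ring. Qed.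
HB.instance Definition _ := Monoid.isComLaw.Build R 0 Rplus RplusA' RplusC' Rplus0l'.

Section Lin.
Variable n : nat.
Notation S F := (\big[Rplus/0]_(i < n) F i).

Lemma sumD (F G : 'I_n -> R) : S (fun i => F i + G i) = S F + S G.
Proof. exact: big_split. Qed.

Lemma sumZ (c : R) (F : 'I_n -> R) : S (fun i => c * F i) = c * S F.
Proof.
apply: (big_rec2 (fun a b => a = c * b)); first by ring.
by move=> i a b _ ->; ring.
Qed.

Lemma sum_le (F G : 'I_n -> R) : (forall i, F i <= G i) -> S F <= S G.
Proof.
move=> H; apply: (big_rec2 (fun a b => a <= b)); first by lra.
by move=> i a b _ Hab; have := H i; lra.
Qed.

Lemma sum_ge0 (F : 'I_n -> R) : (forall i, 0 <= F i) -> 0 <= S F.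
Proof.
move=> H; apply: (big_rec (fun a => 0 <= a)); first by lra.
by move=> i a _ Ha; have := H i; lra.
Qed.

Lemma sum_single (F : 'I_n -> R) j : (forall i, 0 <= F i) -> F j <= S F.
Proof.
move=> H; rewrite (bigD1 j) //=.
have : 0 <= \big[Rplus/0]_(i < n | i != j) F i.
  apply: (big_rec (fun a => 0 <= a)); first by lra.
  by move=> i a _ Ha; have := H i; lra.
move=> Hr; have := Rplus_le_compat_l (F j) _ _ Hr; rewrite Rplus_0_r; exact.
Qed.

Lemma sum_const (c : R) : S (fun _ => c) = INR n * c.
Proof.
rewrite big_const_ord; elim: n => [|m IH] /=; first by ring.
rewrite IH; case: m {IH} => [|m] /=; ring.

Qed.
End Lin.

Section Vecs.
Variable n : nat.
Implicit Types u v w : Vec n.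

Lemma ip_sym u v : ip u v = ip v u.
Proof. by apply: eq_bigr => i _; ring. Qed.

Lemma ip_addl u v w : ip (vadd u v) w = ip u w + ip v w.
Proof. rewrite /ip -sumD; apply: eq_bigr => i _; rewrite /vadd; ring. Qed.

Lemma ip_subl u v w : ip (vsub u v) w = ip u w - ip v w.
Proof.
rewrite /ip; have -> : forall a b, a - b = a + -1 * b by move=> a b; ring.
rewrite -sumZ -sumD; apply: eq_bigr => i _; rewrite /vsub; ring.
Qed.

Lemma ip_scalel a u w : ip (vscale a u) w = a * ip u w.
Proof. rewrite /ip -sumZ; apply: eq_bigr => i _; rewrite /vscale; ring. Qed.

Lemma ip_addr u v w : ip w (vadd u v) = ip w u + ip w v.
Proof. by rewrite ip_sym ip_addl (ip_sym u) (ip_sym v). Qed.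

Lemma ip_subr u v w : ip w (vsub u v) = ip w u - ip w v.
Proof. by rewrite ip_sym ip_subl (ip_sym u) (ip_sym v). Qed.

Lemma ip_scaler a u w : ip w (vscale a u) = a * ip w u.
Proof. by rewrite ip_sym ip_scalel (ip_sym u). Qed.

Lemma ip_ge0 u : 0 <= ip u u.
Proof. apply: sum_ge0 => i; nra. Qed.

Lemma vnorm_ge0 u : 0 <= vnorm u.
Proof. exact: sqrt_pos. Qed.

Lemma vnorm_sq u : vnorm u * vnorm u = ip u u.
Proof. exact: sqrt_sqrt (ip_ge0 u). Qed.

Lemma CS u v : ip u v <= vnorm u * vnorm v.
Proof.
set A := ip u u; set B := ip u v; set C := ip v v.
have quad : forall t, 0 <= A - 2 * t * B + t * t * C.
  move=> t; have := ip_ge0 (vsub u (vscale t v)).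
  rewrite !ip_subl !ip_subr !ip_scalel !ip_scaler (ip_sym v u) -/A -/B -/C.
  lra.
have nu := vnorm_ge0 u; have nv := vnorm_ge0 v.
case: (Rle_lt_dec B 0) => HB; first by nra.
have HC : 0 < C.
  case: (ip_ge0 v) => // HC0.
  have := quad ((A + 1) / (2 * B)).
  have -> : 2 * ((A + 1) / (2 * B)) * B = A + 1 by field; lra.
  change (0 = C) in HC0; rewrite -HC0; lra.
have key : B * B <= A * C.
  have := quad (B / C).
  have h1 : B / C * C = B by field; lra.
  nra.
have su := vnorm_sq u; have sv := vnorm_sq v.
rewrite -/A in su; rewrite -/C in sv.
have hp : B * B <= (vnorm u * vnorm v) * (vnorm u * vnorm v).
  have -> : (vnorm u * vnorm v) * (vnorm u * vnorm v) = A * C by rewrite -su -sv; ring.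
  exact: key.
case: (Rle_lt_dec B (vnorm u * vnorm v)) => // H.
have h0 : 0 <= vnorm u * vnorm v by apply: Rmult_le_pos.
nra.
Qed.

Lemma CS' u v : - (vnorm u * vnorm v) <= ip u v.
Proof.
have := CS (vscale (-1) u) v; rewrite ip_scalel.
have -> : vnorm (vscale (-1) u) = vnorm u.
  rewrite /vnorm ip_scalel ip_scaler; congr sqrt; ring.
lra.
Qed.

Lemma vnorm_tri u v : vnorm (vadd u v) <= vnorm u + vnorm v.
Proof.
have h := CS u v; have nu := vnorm_ge0 u; have nv := vnorm_ge0 v.
have su := vnorm_sq u; have sv := vnorm_sq v.
have s := vnorm_sq (vadd u v); have n0 := vnorm_ge0 (vadd u v).
rewrite ip_addl !ip_addr (ip_sym v u) in s.
nra.
Qed.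

Lemma vsub_split u v w : vsub u w = vadd (vsub u v) (vsub v w).
Proof. apply: functional_extensionality => i; rewrite /vsub /vadd; ring. Qed.

Lemma vnorm_tri_sub u v w : vnorm (vsub u w) <= vnorm (vsub u v) + vnorm (vsub v w).
Proof. rewrite (vsub_split u v w); exact: vnorm_tri. Qed.

Lemma vnorm_sym u v : vnorm (vsub u v) = vnorm (vsub v u).
Proof.
rewrite /vnorm; congr sqrt; apply: eq_bigr => i _; rewrite /vsub; ring.
Qed.

End Vecs.
Arguments ip_sym {n}.
Arguments ip_addl {n}.
Arguments ip_subl {n}.
Arguments ip_scalel {n}.
Arguments ip_addr {n}.
Arguments ip_subr {n}.
Arguments ip_scaler {n}.
Arguments ip_ge0 {n}.
Arguments vnorm_ge0 {n}.
Arguments vnorm_sq {n}.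
Arguments CS {n}.
Arguments CS' {n}.
Arguments vnorm_tri {n}.
Arguments vsub_split {n}.
Arguments vnorm_tri_sub {n}.
Arguments vnorm_sym {n}.

Section Dist.
Variable n : nat.
Implicit Types x y : Vec n.

Lemma dist_spec x (C : Vec n -> Prop) : (exists y, C y) ->
  vi_is_inf (fun r => exists y, C y /\ r = vnorm (vsub x y)) (vi_dist x C).
Proof.
move=> [y0 Cy0]; rewrite /vi_dist; apply: epsilon_spec.
set Sx := (fun r => exists y, C y /\ r = vnorm (vsub x y)).
have [m [Hub Hlub]] : {m | is_lub (fun r => Sx (- r)) m}.
  apply: completeness.
    exists 0 => r [y [_ e]].
    have := vnorm_ge0 (vsub x y); lra.
  exists (- vnorm (vsub x y0)); exists y0; split => //; ring.
exists (- m); split.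
  move=> r Sr; have : r = - - r by ring.
  move=> e; rewrite e in Sr; have := Hub _ Sr; lra.
move=> b Hb; have : m <= - b.
  apply: Hlub => r Sr; have := Hb _ Sr; lra.
lra.
Qed.


Lemma dist_le x (C : Vec n -> Prop) y : C y -> vi_dist x C <= vnorm (vsub x y).
Proof.
move=> Cy; have [H _] := dist_spec x C (ex_intro _ y Cy); apply: H; by exists y.
Qed.

Lemma dist_ge x (C : Vec n -> Prop) b : (exists y, C y) ->
  (forall y, C y -> b <= vnorm (vsub x y)) -> b <= vi_dist x C.
Proof.
move=> ne Hb; have [_ H] := dist_spec x C ne; apply: H => r [y [Cy ->]]; exact: Hb.
Qed.

Lemma dist_ge0 x (C : Vec n -> Prop) : (exists y, C y) -> 0 <= vi_dist x C.
Proof. move=> ne; apply: dist_ge => // y _; exact: vnorm_ge0. Qed.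

Lemma dist_approx x (C : Vec n -> Prop) eps : (exists y, C y) -> 0 < eps ->
  exists y, C y /\ vnorm (vsub x y) < vi_dist x C + eps.
Proof.
move=> ne he; apply: NNPP => Hn.
have : vi_dist x C + eps <= vi_dist x C.
  apply: dist_ge => // y Cy; apply: Rnot_lt_le => Hl; apply: Hn; by exists y.
lra.
Qed.

End Dist.
Arguments dist_spec {n}.
Arguments dist_le {n}.
Arguments dist_ge {n}.
Arguments dist_ge0 {n}.
Arguments dist_approx {n}.

Lemma le_of_eps (a : R) : (forall eps, 0 < eps -> a < eps) -> a <= 0.
Proof. move=> H; apply: Rnot_lt_le => Ha; have := H a Ha; lra. Qed.

Lemma part1 n (T : Vec n -> Vec n) (X : Vec n -> Prop) rho :
  0 < rho -> WS1 T X rho -> WS2 T X rho.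
Proof.
move=> hr W1 xs z Hxs [t [dk [ht [hconv hX]]]] Hnc.
set c := T xs.
have nz0 := vnorm_ge0 z.
case: (Rle_lt_dec (vnorm z) 0) => Hz.
  have e0 : vnorm z = 0 by lra.
  have := CS' c z; rewrite e0; lra.
set w := / vnorm z.
have hw : w * vnorm z = 1 by rewrite /w; field; lra.
have hw0 : 0 < w by apply: Rinv_0_lt_compat.
have step : forall k, rho * ip z (dk k) <= vnorm z * ip c (dk k).
  move=> k.
  set xk := vadd xs (vscale (t k) (dk k)).
  have exk : vsub xk xs = vscale (t k) (dk k).
    apply: functional_extensionality => i; rewrite /vsub /xk /vadd /vscale; ring.
  have h1 := W1 xs xk Hxs (hX k).
  rewrite exk ip_scaler -/c in h1.
  have h2 : t k * ip z (dk k) * w <= vi_dist xk (VI_sol T X).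
    apply: dist_ge; first by exists xs.
    move=> y Hy.
    have hc := CS z (vsub xk y).
    rewrite {1}(vsub_split xk xs y) ip_addr exk ip_scaler in hc.
    have hn := Hnc y Hy.
    have : ip z (vsub xs y) = - ip z (vsub y xs).
      rewrite !ip_subr; ring.
    move=> e; rewrite e in hc.

    have hny := vnorm_ge0 (vsub xk y).
    have : t k * ip z (dk k) <= vnorm z * vnorm (vsub xk y) by lra.
    move=> h; have := Rmult_le_compat_r w _ _ (Rlt_le _ _ hw0) h.
    have -> : vnorm z * vnorm (vsub xk y) * w = vnorm (vsub xk y) by rewrite Rmult_comm -Rmult_assoc hw; ring.
    done.
  have h3 : rho * (t k * ip z (dk k) * w) <= t k * ip c (dk k).
    apply: Rle_trans h1; apply: Rmult_le_compat_l; lra.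
  have htk := ht k.
  have h4 : t k * (rho * ip z (dk k)) <= t k * (vnorm z * ip c (dk k)).
    have := Rmult_le_compat_r (vnorm z) _ _ nz0 h3.
    have -> : rho * (t k * ip z (dk k) * w) * vnorm z = t k * (rho * ip z (dk k)).
      have : rho * (t k * ip z (dk k) * w) * vnorm z = t k * (rho * ip z (dk k)) * (w * vnorm z) by ring.
      by rewrite hw Rmult_1_r.
    move=> h; apply: Rle_trans h _; right; ring.
  exact: Rmult_le_reg_l htk h4.
set wv := vsub (vscale rho z) (vscale (vnorm z) c).
have hwd : forall k, ip wv (dk k) <= 0.
  move=> k; rewrite /wv ip_subl !ip_scalel; have := step k; lra.
have hwz : ip wv z <= 0.
  apply: le_of_eps => eps he.
  have nw := vnorm_ge0 wv.
  have he' : 0 < eps / (vnorm wv + 1) by apply: Rdiv_lt_0_compat; lra.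
  have [N HN] := hconv _ he'.
  have hN := HN N (leqnn N).
  have e : ip wv z = ip wv (dk N) + ip wv (vsub z (dk N)).
    rewrite ip_subr; ring.
  have hc := CS wv (vsub z (dk N)).
  rewrite vnorm_sym in hc.
  have hd := hwd N.
  have hb : vnorm wv * vnorm (vsub (dk N) z) <= vnorm wv * (eps / (vnorm wv + 1)).
    apply: Rmult_le_compat_l => //; lra.
  have : vnorm wv * (eps / (vnorm wv + 1)) < eps.
    have -> : vnorm wv * (eps / (vnorm wv + 1)) = eps - eps / (vnorm wv + 1) by field; lra.
    lra.
  lra.
rewrite /wv ip_subl !ip_scalel -vnorm_sq (ip_sym c) in hwz.
have : vnorm z * (rho * vnorm z - ip z c) <= 0 by lra.
move=> h.
have : rho * vnorm z - ip z c <= 0.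
  apply: Rnot_lt_le => hp; have := Rmult_lt_0_compat _ _ Hz hp; lra.
rewrite ip_sym; lra.
Qed.

Lemma expand_sq n (u v : Vec n) t :
  ip (vsub u (vscale t v)) (vsub u (vscale t v)) = ip u u - 2 * t * ip u v + t * t * ip v v.
Proof. rewrite ip_subl !ip_subr !ip_scalel !ip_scaler (ip_sym v u); ring. Qed.

Lemma proj_normal n (C : Vec n -> Prop) x p :
  vi_convex_set C -> C p -> (forall y, C y -> vnorm (vsub x p) <= vnorm (vsub x y)) ->
  forall y, C y -> ip (vsub x p) (vsub y p) <= 0.
Proof.
move=> Cc Cp Hmin y Cy.
set A := ip (vsub x p) (vsub x p); set B := ip (vsub x p) (vsub y p).
set D := ip (vsub y p) (vsub y p).
have key : forall t, 0 < t <= 1 -> 2 * t * B <= t * t * D.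
  move=> t ht.
  have Ct := Cc y p t Cy Cp (conj (Rlt_le _ _ (proj1 ht)) (proj2 ht)).
  have h := Hmin _ Ct.
  have e : vsub x (vadd (vscale t y) (vscale (1 - t) p)) = vsub (vsub x p) (vscale t (vsub y p)).
    apply: functional_extensionality => i; rewrite /vsub /vadd /vscale; ring.
  rewrite e in h.
  have n1 := vnorm_ge0 (vsub x p); have n2 := vnorm_ge0 (vsub (vsub x p) (vscale t (vsub y p))).
  have s1 := vnorm_sq (vsub x p); have s2 := vnorm_sq (vsub (vsub x p) (vscale t (vsub y p))).
  rewrite expand_sq -/A -/B -/D in s2.
  rewrite -/A in s1.
  have : vnorm (vsub x p) * vnorm (vsub x p) <= vnorm (vsub (vsub x p) (vscale t (vsub y p))) * vnorm (vsub (vsub x p) (vscale t (vsub y p))).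
    by apply: Rmult_le_compat.
  lra.
have hD : 0 <= D by apply: ip_ge0.
apply: Rnot_lt_le => hB.
set t := B / (B + D + 1).
have ht : 0 < t <= 1.
  rewrite /t; split; first by apply: Rdiv_lt_0_compat; lra.
  apply: (Rmult_le_reg_r (B + D + 1)); first lra.
  rewrite /Rdiv Rmult_assoc Rinv_l; lra.
have := key t ht.
have htd : t * (B + D + 1) = B by rewrite /t; field; lra.
nra.
Qed.

Lemma vnorm_zero n (z : Vec n) : vnorm (vsub z z) = 0.
Proof.
rewrite /vnorm.
have -> : ip (vsub z z) (vsub z z) = 0.
  rewrite /ip (eq_bigr (fun _ => 0)); last by move=> i _; rewrite /vsub; ring.
  rewrite sum_const; ring.
exact: sqrt_0.
Qed.

Lemma vnorm_scale n a (u : Vec n) : 0 <= a -> vnorm (vscale a u) = a * vnorm u.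
Proof.
move=> ha; rewrite /vnorm ip_scalel ip_scaler.
rewrite -Rmult_assoc sqrt_mult_alt; last by apply: Rmult_le_pos.
by rewrite sqrt_square.
Qed.

Lemma fin_uniform n (P : nat -> 'I_n -> Prop) :
  (forall i, exists N, forall k, (N <= k)%coq_nat -> P k i) ->
  exists N, forall k, (N <= k)%coq_nat -> forall i, P k i.
Proof.
move=> H.
pose f i := proj1_sig (constructive_indefinite_description _ (H i)).
exists (\max_(i < n) f i) => k hk i.
apply: (proj2_sig (constructive_indefinite_description _ (H i))).
apply: Nat.le_trans hk; apply/leP; exact: (@leq_bigmax _ f i).
Qed.

Lemma vec_close n (ys : nat -> Vec n) p :
  (forall i, Un_cv (fun k => ys k i) (p i)) ->
  forall eps, 0 < eps -> exists N, forall k, (N <= k)%coq_nat -> vnorm (vsub p (ys k)) < eps.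
Proof.
move=> H eps he.
have hn := pos_INR n.
set e' := eps / (INR n + 1).
have he' : 0 < e' by apply: Rdiv_lt_0_compat; lra.
have [N HN] := @fin_uniform n (fun k i => Rabs (ys k i - p i) < e') (fun i => H i e' he').
exists N => k hk; have Hk := HN k hk.
have hsum : ip (vsub p (ys k)) (vsub p (ys k)) <= INR n * (e' * e').
  rewrite -sum_const; apply: sum_le => i; rewrite /vsub.
  have := Hk i; rewrite Rabs_minus_sym => h.
  have ha := Rabs_pos (p i - ys k i).
  have : (p i - ys k i) * (p i - ys k i) = Rabs (p i - ys k i) * Rabs (p i - ys k i).
    rewrite -Rabs_mult Rabs_pos_eq; [done | exact: Rle_0_sqr].
  nra.
have h1 : e' * INR n < eps.
  have -> : e' * INR n = eps - e' by rewrite /e'; field; lra.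
  lra.
have h2 : e' <= eps.
  have e1 : e' * INR n = eps - e' by rewrite /e'; field; lra.
  have : 0 <= e' * INR n by apply: Rmult_le_pos; lra.
  lra.
have hip : ip (vsub p (ys k)) (vsub p (ys k)) < eps * eps by nra.
have sq := vnorm_sq (vsub p (ys k)); have nn := vnorm_ge0 (vsub p (ys k)).
nra.
Qed.

Lemma parallelogram n (a b : Vec n) : ip (vsub b a) (vsub b a) =
  2 * ip a a + 2 * ip b b - 4 * ip (vscale (1/2) (vadd a b)) (vscale (1/2) (vadd a b)).
Proof.
rewrite !ip_subl !ip_subr !ip_scalel !ip_scaler !ip_addl !ip_addr (ip_sym b a); field.
Qed.

Lemma proj_exists n (C : Vec n -> Prop) x : (exists y, C y) -> vi_closed_set C ->
  vi_convex_set C -> exists p, C p /\ forall y, C y -> vnorm (vsub x p) <= vnorm (vsub x y).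
Proof.
move=> ne Cc Cv.
set d := vi_dist x C.
have hd0 : 0 <= d := dist_ge0 x C ne.
have lbC : forall y, C y -> d * d <= ip (vsub x y) (vsub x y).
  move=> y Cy; have h := dist_le x C y Cy.
  have sq := vnorm_sq (vsub x y); rewrite -sq -/d in h *.
  by apply: Rmult_le_compat.
have approx : forall k : nat, exists y, C y /\ ip (vsub x y) (vsub x y) < d * d + / (INR k + 1).
  move=> k; have hk := pos_INR k.
  have heta : 0 < / (INR k + 1) by apply: Rinv_0_lt_compat; lra.
  set eta := / (INR k + 1) in heta *.
  have hq : 0 < eta / (2 * d + 1) by apply: Rdiv_lt_0_compat; lra.
  have hdel : 0 < Rmin 1 (eta / (2 * d + 1)) by apply: Rmin_pos; lra.
  set del := Rmin 1 (eta / (2 * d + 1)) in hdel *.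
  have [y [Cy Hy]] := dist_approx x C del ne hdel.
  exists y; split => //.
  have h1 : del <= 1 := Rmin_l _ _.
  have h2 : del <= eta / (2 * d + 1) := Rmin_r _ _.
  have h3 : del * (2 * d + 1) <= eta.
    have := Rmult_le_compat_r (2 * d + 1) _ _ ltac:(lra) h2.
    rewrite /Rdiv Rmult_assoc Rinv_l; lra.
  have sq := vnorm_sq (vsub x y); have nn := vnorm_ge0 (vsub x y).
  rewrite -sq -/d in Hy *.
  nra.
pose ys k := proj1_sig (constructive_indefinite_description _ (approx k)).
have Cys : forall k, C (ys k).
  by move=> k; case: (proj2_sig (constructive_indefinite_description _ (approx k))).
have Hys : forall k, ip (vsub x (ys k)) (vsub x (ys k)) < d * d + / (INR k + 1).
  by move=> k; case: (proj2_sig (constructive_indefinite_description _ (approx k))).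
have cauchy_bd : forall k m, ip (vsub (ys k) (ys m)) (vsub (ys k) (ys m)) <=
    2 * / (INR k + 1) + 2 * / (INR m + 1).
  move=> k m.
  have e1 : vsub (ys k) (ys m) = vsub (vsub x (ys m)) (vsub x (ys k)).
    apply: functional_extensionality => i; rewrite /vsub; ring.
  set mid := vadd (vscale (1/2) (ys k)) (vscale (1 - 1/2) (ys m)).
  have Cm : C mid by apply: Cv => //; lra.
  have e2 : vsub x mid = vscale (1/2) (vadd (vsub x (ys k)) (vsub x (ys m))).
    apply: functional_extensionality => i; rewrite /mid /vsub /vadd /vscale; field.
  rewrite e1 parallelogram -e2.
  have := lbC _ Cm; have := Hys k; have := Hys m; lra.
have abs_lt : forall a e, 0 < e -> a * a < e * e -> Rabs a < e.
  move=> a e he h.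
  have : Rabs a * Rabs a = a * a by rewrite -Rabs_mult Rabs_pos_eq; [done | exact: Rle_0_sqr].
  have := Rabs_pos a; nra.
have inv_bd : forall N k, (0 < N)%coq_nat -> (N <= k)%coq_nat -> / (INR k + 1) < / INR N.
  move=> N k hN hk.
  have h0 : 0 < INR N by apply: lt_0_INR.
  have h1 : INR N <= INR k by apply: le_INR.
  apply: Rinv_lt_contravar; nra.
have cauchy : forall i, Cauchy_crit (fun k => ys k i).
  move=> i eps he.
  have he2 : 0 < eps * eps / 4 by nra.
  have [N [hN hN0]] := archimed_cor1 _ he2.
  exists N => k m hk hm; rewrite /Rdist.
  apply: abs_lt => //.
  have := cauchy_bd k m.
  have hs := @sum_single n (fun j => vsub (ys k) (ys m) j * vsub (ys k) (ys m) j) i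
    (fun j => Rle_0_sqr _).
  have := inv_bd N k hN0 hk; have := inv_bd N m hN0 hm.
  rewrite /vsub in hs *; rewrite /ip.
  lra.
pose p i := proj1_sig (R_complete _ (cauchy i)).
have conv : forall i, Un_cv (fun k => ys k i) (p i).
  move=> i; exact: (proj2_sig (R_complete _ (cauchy i))).
have close := @vec_close _ _ _ conv.
have Cp : C p.
  apply: Cc => eps he; have [N HN] := close eps he.
  exists (ys N); split => //; exact: HN N (le_n N).
exists p; split => // y Cy.
apply: Rle_trans (dist_le x C y Cy).
rewrite -/d.
suff : vnorm (vsub x p) - d <= 0 by lra.
apply: le_of_eps => eps he.
have he2 : 0 < eps / 2 by lra.
have [N1 HN1] := close _ he2.
have he4 : 0 < eps * eps / 4 by nra.
have [N2 [hN2 hN20]] := archimed_cor1 _ he4.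
set k := (N1 + N2)%coq_nat.
have h1 := HN1 k (Nat.le_add_r N1 N2).
have h2 := Hys k.
have h3 := inv_bd N2 k hN20 (ltac:(rewrite /k; lia)).
have h4 : vnorm (vsub x (ys k)) < d + eps / 2.
  have sq := vnorm_sq (vsub x (ys k)); have nn := vnorm_ge0 (vsub x (ys k)).
  apply: Rnot_le_lt => hc.
  have : (d + eps / 2) * (d + eps / 2) <= vnorm (vsub x (ys k)) * vnorm (vsub x (ys k)).
    apply: Rmult_le_compat; lra.
  nra.
have h5 := vnorm_tri_sub x (ys k) p.
rewrite (vnorm_sym (ys k) p) in h5.
lra.
Qed.

Lemma sol_closed n (T : Vec n -> Vec n) X : vi_continuous_op T -> vi_closed_set X ->
  (forall x y : Vec n, VI_sol T X x -> VI_sol T X y -> T x = T y) ->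
  vi_closed_set (VI_sol T X).
Proof.
move=> Tc Xc Tconst x Hcl.
have Xx : X x.
  apply: Xc => eps he; have [y [Hy Hn]] := Hcl eps he; by exists y; split => //; case: Hy.
split => // w Xw.
have [y0 [Hy0 _]] := Hcl 1 Rlt_0_1.
set c := T y0.
have hTc : forall y, VI_sol T X y -> T y = c by move=> y Hy; exact: Tconst.
suff : - ip (T x) (vsub w x) <= 0 by lra.
apply: le_of_eps => eps he.
set b := vnorm (vsub w x); have hb : 0 <= b := vnorm_ge0 _.
set nc := vnorm c; have hnc : 0 <= nc := vnorm_ge0 _.
have he1 : 0 < eps / (2 * (b + 1)) by apply: Rdiv_lt_0_compat; lra.
have [del [hdel Hdel]] := Tc x _ he1.
have he2 : 0 < eps / (2 * (nc + 1)) by apply: Rdiv_lt_0_compat; lra.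
have hm : 0 < Rmin del (eps / (2 * (nc + 1))) by apply: Rmin_pos.
have [y [Hy Hxy]] := Hcl _ hm.
have hxy1 : vnorm (vsub y x) < del.
  rewrite vnorm_sym; have := Rmin_l del (eps / (2 * (nc + 1))); lra.
have hxy2 : vnorm (vsub y x) < eps / (2 * (nc + 1)).
  rewrite vnorm_sym; have := Rmin_r del (eps / (2 * (nc + 1))); lra.
have hT := Hdel y hxy1.
rewrite (hTc y Hy) vnorm_sym in hT.
have e : ip (T x) (vsub w x) =
   ip c (vsub w y) + ip (vsub (T x) c) (vsub w x) + ip c (vsub y x).
  rewrite ip_subl !ip_subr; ring.
have h1 : 0 <= ip c (vsub w y).
  have := proj2 Hy w Xw; by rewrite (hTc y Hy).
have h2 := CS' (vsub (T x) c) (vsub w x).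
have h3 := CS' c (vsub y x).
have h4 : vnorm (vsub (T x) c) * b <= eps / (2 * (b + 1)) * b.
  apply: Rmult_le_compat_r => //; lra.
have h5 : eps / (2 * (b + 1)) * b < eps / 2.
  have -> : eps / (2 * (b + 1)) * b = eps / 2 - eps / (2 * (b + 1)) by field; lra.
  lra.
have h6 : nc * vnorm (vsub y x) <= nc * (eps / (2 * (nc + 1))).
  apply: Rmult_le_compat_l => //; lra.
have h7 : nc * (eps / (2 * (nc + 1))) < eps / 2.
  have -> : nc * (eps / (2 * (nc + 1))) = eps / 2 - eps / (2 * (nc + 1)) by field; lra.
  lra.
rewrite -/b -/nc in h2 h3.
lra.
Qed.

Lemma sol_convex n (T : Vec n -> Vec n) X : vi_continuous_op T -> vi_monotone T ->
  vi_convex_set X -> vi_convex_set (VI_sol T X).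
Proof.
move=> Tc Tm Xv y1 y2 t H1 H2 ht.
set y := vadd (vscale t y1) (vscale (1 - t) y2).
have Xy : X y by apply: Xv => //; [exact: proj1 H1 | exact: proj1 H2].
split => // w Xw.
have minty : forall s, 0 < s <= 1 ->
    0 <= ip (T (vadd (vscale s w) (vscale (1 - s) y))) (vsub w y).
  move=> s hs.
  set ws := vadd (vscale s w) (vscale (1 - s) y).
  have Xws : X ws by apply: Xv => //; lra.
  have m1 : 0 <= ip (T ws) (vsub ws y1).
    have := Tm y1 ws; rewrite ip_subl => h; have := proj2 H1 ws Xws; lra.
  have m2 : 0 <= ip (T ws) (vsub ws y2).
    have := Tm y2 ws; rewrite ip_subl => h; have := proj2 H2 ws Xws; lra.
  have e1 : vsub ws y = vadd (vscale t (vsub ws y1)) (vscale (1 - t) (vsub ws y2)).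
    apply: functional_extensionality => i; rewrite /vsub /vadd /vscale /ws /y /vadd /vscale; ring.
  have e2 : vsub ws y = vscale s (vsub w y).
    apply: functional_extensionality => i; rewrite /ws /vsub /vadd /vscale; ring.
  have h : 0 <= ip (T ws) (vsub ws y).
    rewrite e1 ip_addr !ip_scaler; nra.
  rewrite e2 ip_scaler in h.
  apply: Rnot_lt_le => hn; nra.
suff : - ip (T y) (vsub w y) <= 0 by lra.
apply: le_of_eps => eps he.
set b := vnorm (vsub w y); have hb : 0 <= b := vnorm_ge0 _.
have he1 : 0 < eps / (b + 1) by apply: Rdiv_lt_0_compat; lra.
have [del [hdel Hdel]] := Tc y _ he1.
have hs0 : 0 < del / (b + 1) by apply: Rdiv_lt_0_compat; lra.
set s := Rmin 1 (del / (b + 1)).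
have hs : 0 < s <= 1.
  split; [apply: Rmin_pos; lra | apply: Rmin_l].
set ws := vadd (vscale s w) (vscale (1 - s) y).
have e2 : vsub ws y = vscale s (vsub w y).
  apply: functional_extensionality => i; rewrite /ws /vsub /vadd /vscale; ring.
have hn : vnorm (vsub ws y) < del.
  rewrite e2 vnorm_scale; last lra.
  rewrite -/b.
  have : s * b <= del / (b + 1) * b.
    apply: Rmult_le_compat_r => //; apply: Rmin_r.
  have -> : del / (b + 1) * b = del - del / (b + 1) by field; lra.
  lra.
have hT := Hdel ws hn.
rewrite vnorm_sym in hT.
have hm := minty s hs; rewrite -/ws in hm.
have e : ip (T y) (vsub w y) = ip (T ws) (vsub w y) + ip (vsub (T y) (T ws)) (vsub w y).
  rewrite ip_subl; ring.
have hc := CS' (vsub (T y) (T ws)) (vsub w y); rewrite -/b in hc.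
have h4 : vnorm (vsub (T y) (T ws)) * b <= eps / (b + 1) * b.
  apply: Rmult_le_compat_r => //; lra.
have h5 : eps / (b + 1) * b < eps.
  have -> : eps / (b + 1) * b = eps - eps / (b + 1) by field; lra.
  lra.
lra.
Qed.

Lemma part2 n (T : Vec n -> Vec n) (X : Vec n -> Prop) rho : 0 < rho ->
  vi_continuous_op T -> vi_monotone T -> vi_closed_set X -> vi_convex_set X ->
  (forall x y : Vec n, VI_sol T X x -> VI_sol T X y -> T x = T y) ->
  WS2 T X rho -> WS1 T X rho.
Proof.
move=> hr Tc Tm Xc Xv Tconst W2 xs x Hxs Xx.
have ne : exists y, VI_sol T X y by exists xs.
have [p [Hp Hmin]] := @proj_exists _ _ x ne (@sol_closed _ _ _ Tc Xc Tconst) (@sol_convex _ _ _ Tc Tm Xv).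
set z := vsub x p.
have htan : vi_tangent_cone X p z.
  exists (fun _ => 1), (fun _ => z); split; first by move=> _; lra.
  split.
    move=> eps he; exists 0%N => k _; rewrite vnorm_zero; lra.
  move=> k.
  have -> : vadd p (vscale 1 z) = x.
    apply: functional_extensionality => i; rewrite /vadd /vscale /z /vsub; ring.
  exact: Xx.
have hnc : vi_normal_cone (VI_sol T X) p z.
  move=> y Hy; exact: (@proj_normal _ _ x p (@sol_convex _ _ _ Tc Tm Xv) Hp Hmin y Hy).
have h := W2 p z Hp htan hnc.
rewrite (Tconst p xs Hp Hxs) in h.
have hd := dist_le x (VI_sol T X) p Hp.
have h2 : 0 <= ip (T xs) (vsub p xs) by apply: (proj2 Hxs); exact: (proj1 Hp).
have e : ip (T xs) z = ip (T xs) (vsub x xs) - ip (T xs) (vsub p xs).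
  rewrite /z !ip_subr; ring.
have : rho * vi_dist x (VI_sol T X) <= rho * vnorm z.
  apply: Rmult_le_compat_l; [lra | exact: hd].
lra.
Qed.

Theorem proposition2p1 (n : nat) (T : Vec n -> Vec n) (X : Vec n -> Prop) :
  vi_continuous_op T -> vi_monotone T ->
  (exists x : Vec n, X x) -> vi_closed_set X -> vi_convex_set X ->
  forall rho : R, 0 < rho ->
    (WS1 T X rho -> WS2 T X rho) /\
    ((forall x y : Vec n, VI_sol T X x -> VI_sol T X y -> T x = T y) ->
       WS2 T X rho -> WS1 T X rho).
Proof.
move=> Tc Tm _ Xc Xv rho hr; split.
  exact: part1.
move=> Tconst; exact: part2.
Qed.
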